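(* Let $(z,x)$ be a feasible solution of the cluster LP on a finite vertex set $V$, and for every $S\subseteq V$ define $y_S=\sum_{S'\supseteq S}z_{S'}$. Then for every nonempty $T\subseteq V$, the matrix $M\in\mathbb R^{V\times V}$ with entries $M_{uv}=y_{T\cup\{u,v\}}-y_{T\cup\{u\}}\,y_{T\cup\{v\}}$ (for all $u,v\in V$, including $u=v$) is positive semidefinite.
   Context: The cluster LP for a finite vertex set $V$ has a variable $z_S$ for every nonempty $S\subseteq V$ and $x_{uv}$ for every unordered pair $uv$ of distinct vertices, with constraints $\sum_{S\ni u}z_S=1$ for all $u\in V$, $\sum_{S\supseteq\{u,v\}}z_S=1-x_{uv}$ for all $uv$, and $z_S\ge0$. *)

(* Defs.v *)
From mathcomp Require Import all_boot all_order all_algebra.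
Set Implicit Arguments. Unset Strict Implicit. Unset Printing Implicit Defensive.
Import Order.TTheory GRing.Theory Num.Theory.
Local Open Scope ring_scope.

(* Feasibility for the cluster LP on the finite vertex set V.
   z S is only meaningful for nonempty S (z set0 is ignored);
   x u v is the pair variable, constrained for every pair of distinct u, v. *)
Definition cluster_lp_feasible (R : realFieldType) (V : finType)
    (z : {set V} -> R) (x : V -> V -> R) : Prop :=
  [/\ (forall u : V, \sum_(S : {set V} | u \in S) z S = 1),
      (forall u v : V, u != v ->
         \sum_(S : {set V} | (u \in S) && (v \in S)) z S = 1 - x u v) &
      (forall S : {set V}, S != set0 -> 0 <= z S)].

Definition yS (R : realFieldType) (V : finType) (z : {set V} -> R)
    (S : {set V}) : R :=
  \sum_(S' : {set V} | (S \subset S') && (S' != set0)) z S'.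

Definition psd (R : realFieldType) (V : finType) (M : V -> V -> R) : Prop :=
  (forall u v, M u v = M v u) /\
  (forall c : V -> R, 0 <= \sum_(u : V) \sum_(v : V) c u * M u v * c v).

(* Main.v *)
Require Import Defs.
From mathcomp Require Import all_boot all_order all_algebra.
From mathcomp Require Import ring lra.
Import Order.TTheory GRing.Theory Num.Theory.
Local Open Scope ring_scope.

Lemma cs (R : realFieldType) (I : finType) (P : pred I) (w f : I -> R) :
  (forall i, P i -> 0 <= w i) ->
  (\sum_(i | P i) w i * f i) ^+ 2 <=
  (\sum_(i | P i) w i) * (\sum_(i | P i) w i * f i ^+ 2).
Proof.
move=> w0.
set W := \sum_(i | P i) w i.
set Q := \sum_(i | P i) w i * f i ^+ 2.
set A := \sum_(i | P i) w i * f i.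
have H : \sum_(i | P i) \sum_(j | P j) w i * w j * (f i - f j) ^+ 2
         = 2 * (W * Q - A ^+ 2).
  have E : forall i j, w i * w j * (f i - f j) ^+ 2 =
     w i * (w j * f j ^+ 2) + (w i * f i ^+ 2) * w j
     - 2 * ((w i * f i) * (w j * f j)).
    by move=> i j; ring.
  under eq_bigr => i _ do under eq_bigr => j _ do rewrite E.
  have I1 : forall i, \sum_(j | P j) (w i * (w j * f j ^+ 2) + w i * f i ^+ 2 * w j
       - 2 * (w i * f i * (w j * f j))) = w i * Q + w i * f i ^+ 2 * W
       - 2 * (w i * f i * A).
    move=> i; rewrite sumrB big_split /= -!mulr_sumr ?mulr_suml.
    by rewrite -/Q -/W ?mulr_sumr -/A.
  under eq_bigr => i _ do rewrite I1.
  rewrite sumrB big_split /= -!mulr_suml -/W -/Q -mulr_sumr -mulr_suml -/A.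
  ring.
have : 0 <= 2 * (W * Q - A ^+ 2).
  rewrite -H; apply: sumr_ge0 => i Pi; apply: sumr_ge0 => j Pj.
  by rewrite mulr_ge0 ?sqr_ge0 // mulr_ge0 ?w0.
move=> h; nra.
Qed.

Theorem lemma24 (R : realFieldType) (V : finType)
    (z : {set V} -> R) (x : V -> V -> R) :
  cluster_lp_feasible z x ->
  forall T : {set V}, T != set0 ->
    psd (fun u v : V =>
           yS z (T :|: [set u; v]) - yS z (T :|: [set u]) * yS z (T :|: [set v])).
Proof.
case=> cov _ zge0 T T0.
have Tne : forall S : {set V}, T \subset S -> S != set0.
  move=> S TS; apply/negP => /eqP S0; move: TS; rewrite S0 subset0 => /eqP.
  by move/eqP: T0.
have Y : forall A : {set V}, yS z (T :|: A) =
   \sum_(S : {set V} | T \subset S) z S * (A \subset S)%:R.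
  move=> A; rewrite /yS big_mkcond [RHS]big_mkcond /=; apply: eq_bigr => S _.
  rewrite subUset; case TS: (T \subset S) => /=; last by [].
  by rewrite Tne // andbT; case: (A \subset S); rewrite ?mulr1 ?mulr0.
split.
  by move=> u v /=; rewrite [[set u; v]]setUC [yS z (T :|: [set u]) * _]mulrC.
move=> c.
set f := fun S : {set V} => \sum_u c u * (u \in S)%:R.
have E1 : \sum_u c u * yS z (T :|: [set u]) = \sum_(S : {set V} | T \subset S) z S * f S.
  under eq_bigr => u _ do rewrite Y mulr_sumr.
  rewrite exchange_big /=; apply: eq_bigr => S _.
  rewrite /f mulr_sumr; apply: eq_bigr => u _.
  by rewrite sub1set; ring.
have E2 : \sum_u \sum_v c u * yS z (T :|: [set u; v]) * c v
     = \sum_(S : {set V} | T \subset S) z S * f S ^+ 2.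
  have F : forall (u v : V) (S : {set V}), ([set u; v] \subset S)%:R = (u \in S)%:R * (v \in S)%:R :> R.
    move=> u v S; rewrite subUset !sub1set.
    by case: (u \in S); case: (v \in S); rewrite ?mulr1 ?mulr0.
  under eq_bigr => u _ do under eq_bigr => v _ do rewrite Y mulr_sumr mulr_suml.
  under eq_bigr => u _ do rewrite exchange_big /=.
  rewrite exchange_big /=; apply: eq_bigr => S _.
  rewrite /f expr2 big_distrlr /= mulr_sumr; apply: eq_bigr => u _.
  rewrite mulr_sumr; apply: eq_bigr => v _.
  rewrite F; ring.
have -> : \sum_u \sum_v c u * (yS z (T :|: [set u; v])
      - yS z (T :|: [set u]) * yS z (T :|: [set v])) * c v
   = \sum_u \sum_v c u * yS z (T :|: [set u; v]) * c v
     - (\sum_u c u * yS z (T :|: [set u])) ^+ 2.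
  rewrite expr2 mulr_suml -sumrB; apply: eq_bigr => u _.
  rewrite mulr_sumr -sumrB; apply: eq_bigr => v _; ring.
rewrite E1 E2 subr_ge0.
have w0 : forall S : {set V}, T \subset S -> 0 <= z S by move=> S /Tne; apply: zge0.
have CS := @cs R _ (fun S : {set V} => T \subset S) z f w0.
have Q0 : 0 <= \sum_(S : {set V} | T \subset S) z S * f S ^+ 2.
  by apply: sumr_ge0 => S /w0 h; rewrite mulr_ge0 ?sqr_ge0.
have W1 : \sum_(S : {set V} | T \subset S) z S <= 1.
  case/set0Pn: T0 => t tT.
  rewrite -(cov t) [X in _ <= X](bigID (fun S : {set V} => T \subset S)) /=.
  have -> : \sum_(S : {set V} | (t \in S) && (T \subset S)) z S = \sum_(S : {set V} | T \subset S) z S.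
    apply: eq_bigl => S; case TS: (T \subset S); rewrite ?andbF ?andbT //.
    by rewrite (subsetP TS).
  rewrite lerDl; apply: sumr_ge0 => S /andP [tS _]; apply: zge0.
  by apply/set0Pn; exists t.
nra.
Qed.
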